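(* Let $n\ge2$, $\mathbf b\in\mathbb R^{n-1}$ with $\mathbf b\notin\mathcal W^+_n(1,n-1)$, and $v>n$. For $Q>0$ let $\mathcal A(\mathbf b,v,Q)$ be the set of $x\in[0,1)$ for which $|p+(\tilde{\mathbf b}\mathbf q)x|<Q^{-v}$ for some $p\in\mathbb Z$ and $\mathbf q=(q_0,\dots,q_{n-1})^T\in\mathbb Z^n$ with $Q\le\|\mathbf q\|<2Q$, where $\tilde{\mathbf b}=(1,b_1,\dots,b_{n-1})$. Then there exists $C=C(\mathbf b,v)>0$ such that $|\mathcal A(\mathbf b,v,Q)|<CQ^{\frac{n-v}2}$ for all $Q>1$.
   Context: Sup-norms; $|\cdot|$ is Lebesgue measure. $\mathbf b\in\mathcal W_u(1,n-1)$ means there are infinitely many $\mathbf q\in\mathbb Z^{n-1}$ with $|\mathbf b\mathbf q+p|\le\|\mathbf q\|^{-u}$ for some $p\in\mathbb Z$; $\mathcal W^+_n(1,n-1)=\bigcup_{u>n}\mathcal W_u(1,n-1)$. *)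

(* Defs.v *)
From HB Require Import structures.
From mathcomp Require Import all_boot all_order all_algebra.
From mathcomp Require Import all_classical all_reals all_analysis.
Set Implicit Arguments. Unset Strict Implicit. Unset Printing Implicit Defensive.
Import Order.TTheory GRing.Theory Num.Theory.
Local Open Scope classical_set_scope.
Local Open Scope ring_scope.

Definition supn (k : nat) (q : 'rV[int]_k) : nat := \max_(i < k) `|q ord0 i|%N.

Definition W_u (R : realType) (k : nat) (u : R) : set 'rV[R]_k :=
  [set b | infinite_set [set q : 'rV[int]_k |
     exists p : int, `|\sum_(i < k) b ord0 i * (q ord0 i)%:~R + p%:~R|
                       <= ((supn q)%:R : R) `^ (- u)]].

Definition W_plus (R : realType) (n : nat) : set 'rV[R]_(n.-1) :=
  \bigcup_(u in [set u : R | (n%:R < u)%R]) @W_u R (n.-1) u.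

(* btilde = (1, b_1, ..., b_{n-1}) as a function of the index 0..n-1 *)
Definition btilde (R : realType) (n : nat) (b : 'rV[R]_(n.-1)) (i : 'I_n) : R :=
  if val i is k.+1 then
    (if insub k is Some j then b ord0 j else 0)
  else 1.

Definition btq (R : realType) (n : nat) (b : 'rV[R]_(n.-1)) (q : 'rV[int]_n) : R :=
  \sum_(i < n) btilde b i * (q ord0 i)%:~R.

Definition A_set (R : realType) (n : nat) (b : 'rV[R]_(n.-1)) (v Q : R) : set R :=
  [set x | 0 <= x < 1 /\
     exists (p : int) (q : 'rV[int]_n),
       Q <= (supn q)%:R < 2 * Q /\ `|p%:~R + btq b q * x| < Q `^ (- v)].

(* Main.v *)
Require Import Defs.
From HB Require Import structures.
From mathcomp Require Import all_boot all_order all_algebra.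
From mathcomp Require Import all_classical all_reals all_analysis.
From mathcomp Require Import ring lra zify.
Import Order.TTheory GRing.Theory Num.Theory.
Set Implicit Arguments. Unset Strict Implicit. Unset Printing Implicit Defensive.
Local Open Scope classical_set_scope.
Local Open Scope ring_scope.
Section S1.
Variable R : realType.
Local Notation mu := (@lebesgue_measure R).

Lemma mu_bigcup_seq (I : eqType) (s : seq I) (G : I -> set R) :
  (mu (\bigcup_(i in [set i | i \in s]) G i) <= \sum_(i <- s) mu (G i))%E.
Proof.
elim: s => [|x s IH].
  rewrite big_nil (_ : \bigcup_(i in _) _ = set0) ?measure0//.
  by apply/seteqP; split => // y [i].
rewrite big_cons; apply: (le_trans _ (leeD2l _ IH)).
apply: (le_trans _ (outer_measureU2 _ _ _)).
apply: le_outer_measure => y [i] /=; rewrite in_cons => /orP[/eqP->|iin] Gy.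
  by left.
by right; exists i.
Qed.

Lemma mu_bigcup_fin (I : finType) (G : I -> set R) :
  (mu (\bigcup_i G i) <= \sum_i mu (G i))%E.
Proof.
have := @mu_bigcup_seq I (enum I) G; rewrite big_enum /=.
apply: le_trans; apply: le_outer_measure => y [i _ Gy]; exists i => //=.
by rewrite mem_enum.
Qed.

Definition strip (a d : R) : set R :=
  [set x | 0 <= x < 1 /\ exists p : int, `|p%:~R + a * x| < d].

Lemma mu_strip (a d : R) : a != 0 -> 0 <= d <= 1 ->
  (mu (strip a d) <= (4 * d + 6 * d / `|a|)%:E)%E.
Proof.
move=> a0 /andP[d0 d1].
set J := (Num.truncn `|a|).+1.
have a0' : 0 < `|a| by rewrite normr_gt0.
pose G (j : 'I_(2 * J).+1) := ball (- ((j%:Z - J%:Z)%:~R) / a) (d / `|a|).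
have sub : strip a d `<=` \bigcup_j G j.
  move=> x [/andP[x0 x1] [p hp]].
  have hpa : `|p%:~R| < `|a| + 1 :> R.
    have -> : (p%:~R : R) = (p%:~R + a * x) - a * x by rewrite addrK.
    have h1 : `|a * x| <= `|a| by rewrite normrM (ger0_norm x0) ler_piMr// ltW.
    have := ler_normB (p%:~R + a * x) (a * x); lra.
  have hpJ : (`|p| <= J)%N.
    rewrite leqNgt; apply/negP => H.
    have := truncnS_gt `|a|.
    move: H; rewrite -(ler_nat R).
    move: hpa; rewrite -intr_norm -natr_absz /J -!natr1; lra.
  have hpJ0 : (0 <= p + J%:Z)%R.
    move: hpJ; lia.
  have jlt : ((absz (p + J%:Z)%R) < (2 * J).+1)%N.
    move: hpJ hpJ0; lia.
  exists (Ordinal jlt) => //.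
  rewrite /G /= -ball_normE /=.
  have -> : ((absz (p + J%:Z)%R)%:Z - J%:Z) = p.
    by rewrite abszE ger0_norm // addrK.
  have -> : - (p%:~R) / a - x = - ((p%:~R + a * x) / a) by field.
  by rewrite normrN normrM normfV ltr_pM2r // invr_gt0.
apply: (le_trans (le_outer_measure mu _ _ sub)).
apply: (le_trans (@mu_bigcup_fin _ G)).
have r0 : 0 <= d / `|a| by rewrite divr_ge0.
rewrite (eq_bigr (fun=> ((d / `|a|) *+ 2)%:E)); last first.
  by move=> j _; rewrite /G lebesgue_measure_ball.
rewrite sumEFin lee_fin sumr_const card_ord.
have hJ : (J%:R : R) <= `|a| + 1.
  by rewrite /J -natr1 lerD2r truncn_le normr_ge0.
have e : 4 * d + 6 * d / `|a| = (d / `|a|) * (4 * `|a| + 6).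
  by field; rewrite gt_eqF.
rewrite e -mulrnA -[X in X <= _]mulr_natr.
apply: ler_wpM2l => //.

move: hJ; lra.
Qed.
End S1.
Section S2.
Variable R : realType.

Lemma frac_bound (y : R) : (forall p : int, y + p%:~R != 0) ->
  exists2 d : R, 0 < d & forall p : int, d <= `|y + p%:~R|.
Proof.
move=> H; set fl := Num.floor y.
have fa : fl%:~R <= y by exact: floor_le.
have fb : y < fl%:~R + 1 by have := floorD1_gt y; rewrite intrD.
have fn0 : y - fl%:~R != 0 by have := H (- fl); rewrite intrN.
have f0 : 0 < y - fl%:~R by rewrite lt_neqAle eq_sym fn0 subr_ge0.
exists (Num.min (y - fl%:~R) (1 - (y - fl%:~R))).
  by rewrite lt_min f0 /=; lra.
move=> p; rewrite ge_min; case: (lerP (- p) fl) => hp.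
  apply/orP; left; move: hp; rewrite -(ler_int R) intrN => hp.
  by apply: (le_trans _ (ler_norm _)); lra.
apply/orP; right.
have hp' : (fl + 1 <= - p)%R by lia.
move: hp'; rewrite -(ler_int R) intrN intrD => hp'.
by rewrite -normrN; apply: (le_trans _ (ler_norm _)); lra.
Qed.

Lemma powRN_anti (x y u : R) : 0 < x -> x <= y -> 0 <= u ->
  y `^ (- u) <= x `^ (- u).
Proof.
move=> x0 xy u0; have y0 : 0 < y by exact: lt_le_trans x0 xy.
rewrite !powRN lef_pV2 ?posrE ?powR_gt0 //.
by apply: ge0_ler_powR => //; rewrite nnegrE ltW.
Qed.

Lemma powR_le1 (x u : R) : 1 <= x -> 0 <= u -> x `^ (- u) <= 1.
Proof.
move=> x1 u0; rewrite -(powRr0 x); apply: ler_powR => //; lra.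
Qed.

Lemma supn_ge k (q : 'rV[int]_k) i : (`|q ord0 i| <= supn q)%N.
Proof. by rewrite /supn; apply: leq_bigmax. Qed.

Lemma supn_gt0 k (q : 'rV[int]_k) : q != 0 -> (0 < supn q)%N.
Proof.
move=> q0; rewrite lt0n; apply: contra q0 => /eqP s0; apply/eqP/rowP => i.
have := supn_ge q i; rewrite s0 leqn0 absz_eq0 => /eqP ->; by rewrite mxE.
Qed.

Variable m : nat.
Definition tl (q : 'rV[int]_m.+1) : 'rV[int]_m := \row_j q ord0 (lift ord0 j).
Definition bsum (b : 'rV[R]_m) (q : 'rV[int]_m) : R :=
  \sum_(i < m) b ord0 i * (q ord0 i)%:~R.

Lemma btq_split (b : 'rV[R]_m) (q : 'rV[int]_m.+1) :
  btq (n := m.+1) b q = bsum b (tl q) + (q ord0 ord0)%:~R.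
Proof.
rewrite /btq big_ord_recl /btilde /= mul1r addrC; congr (_ + _).
apply: eq_bigr => j _; rewrite /bumpS /= mxE.
by rewrite (insubT (fun k => k < m)%N (ltn_ord j)) /=; congr (_ * _); congr (b _ _); apply: val_inj.
Qed.

Lemma supn_tl (q : 'rV[int]_m.+1) : (supn (tl q) <= supn q)%N.
Proof.
by apply/bigmax_leqP => j _; rewrite mxE; apply: supn_ge.
Qed.

Lemma bsum_scale (b : 'rV[R]_m) (k : int) (q : 'rV[int]_m) :
  bsum b (k *: q) = k%:~R * bsum b q.
Proof.
rewrite /bsum mulr_sumr; apply: eq_bigr => i _; rewrite mxE intrM; ring.
Qed.


Definition Sset (b : 'rV[R]_m) (u : R) : set 'rV[int]_m :=
  [set q | exists p : int, `|bsum b q + p%:~R| <= ((supn q)%:R : R) `^ (- u)].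

Lemma rV_neq0 k (q : 'rV[int]_k) : q != 0 -> exists i, q ord0 i != 0.
Proof.
move=> q0; apply/existsP; apply: contraR q0 => /existsPn h.
by apply/eqP/rowP => i; rewrite mxE; apply/eqP; rewrite -[_ == _]negbK h.
Qed.

Lemma no_exact b u : finite_set (Sset b u) ->
  forall q, q != 0 -> forall p : int, bsum b q + p%:~R != 0.
Proof.
move=> /finite_fsetP [X eX] q q0 p; apply/negP => /eqP h.
pose N := (\max_(x <- finmap.enum_fset X) supn x)%N.
pose w := (N.+1)%:Z *: q.
have wS : Sset b u w.
  exists (N.+1%:Z * p); rewrite bsum_scale intrM -mulrDr h mulr0 normr0.
  exact: powR_ge0.
have wX : w \in finmap.enum_fset X by move: wS; rewrite eX.
have h1 : (supn w <= N)%N by apply: (@leq_bigmax_seq _ _ xpredT (fun x => supn x)).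
have [i qi] := rV_neq0 q0.
have h2 : (N.+1 <= supn w)%N.
  apply: leq_trans (supn_ge w i); rewrite mxE abszM /=.
  by rewrite leq_pmulr // absz_gt0.
lia.
Qed.


Lemma list_min (b : 'rV[R]_m) (l : seq 'rV[int]_m) :
  (forall q, q != 0 -> forall p : int, bsum b q + p%:~R != 0) ->
  exists2 c : R, 0 < c &
    forall q, q \in l -> q != 0 -> forall p : int, c <= `|bsum b q + p%:~R|.
Proof.
move=> NE; elim: l => [|x l [c c0 hc]]; first by exists 1 => //.
case: (eqVneq x 0) => x0.
  exists c => // q; rewrite in_cons => /orP[/eqP->|ql]; first by rewrite x0 eqxx.
  exact: hc.
have [d d0 hd] := frac_bound (NE x x0).
exists (Num.min c d); first by rewrite lt_min c0 d0.
move=> q; rewrite in_cons => /orP[/eqP->|ql] q0 p.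
  by rewrite ge_min hd orbT.
by rewrite ge_min hc.
Qed.

Lemma intr_norm_ge1 (p : int) : p != 0 -> 1 <= `|(p%:~R : R)|.
Proof.
move=> p0; rewrite -intr_norm -natr_absz ler1n absz_gt0 //.
Qed.

Lemma dioph (b : 'rV[R]_m) (u : R) : 0 <= u -> finite_set (Sset b u) ->
  exists c : R, 0 < c /\ c <= 1 /\ forall q : 'rV[int]_m.+1, q != 0 ->
    c * ((supn q)%:R) `^ (- u) <= `|btq (n := m.+1) b q|.
Proof.
move=> u0 fin; have NE := no_exact fin.
have [X eX] := finite_fsetP.1 fin.
have [c0 c00 hc0] := list_min (finmap.enum_fset X) NE.
exists (Num.min c0 1); split; first by rewrite lt_min c00 ltr01.
split; first by rewrite ge_min lexx orbT.
move=> q q0; rewrite btq_split.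
have s1 : (0 < supn q)%N by apply: supn_gt0.
have sq1 : 1 <= (supn q)%:R :> R by rewrite ler1n.
have pw1 := powR_le1 sq1 u0.
have pw0 : 0 <= (supn q)%:R `^ (- u) :> R by exact: powR_ge0.
have mc1 : Num.min c0 1 <= 1 by rewrite ge_min lexx orbT.
have mc0 : Num.min c0 1 <= c0 by rewrite ge_min lexx.
have mc00 : 0 <= Num.min c0 1 by rewrite le_min (ltW c00) ler01.
case: (eqVneq (tl q) 0) => tq.
  have q00 : q ord0 ord0 != 0.
    apply: contra q0 => /eqP h; apply/eqP/rowP => j; rewrite mxE.
    case: (unliftP ord0 j) => [k ->|->]; last exact: h.
    by have := congr1 (fun M : 'rV[int]_m => M ord0 k) tq; rewrite !mxE.
  have -> : bsum b (tl q) = 0 by rewrite tq /bsum big1 // => i _; rewrite mxE mulr0.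
  rewrite add0r; apply: (le_trans _ (intr_norm_ge1 q00)).
  by rewrite -[leRHS](mulr1 1); apply: ler_pM.
case: (pselect (Sset b u (tl q))) => hS.
  have tX : tl q \in finmap.enum_fset X by move: hS; rewrite eX.
  apply: (le_trans _ (hc0 _ tX tq _)).
  by rewrite -[leRHS](mulr1 c0); apply: ler_pM.
have hlt : (supn (tl q))%:R `^ (- u) < `|bsum b (tl q) + (q ord0 ord0)%:~R|.
  rewrite ltNge; apply/negP => hle; apply: hS; by exists (q ord0 ord0).
have st : 0 < (supn (tl q))%:R :> R by rewrite ltr0n supn_gt0.
have hsl : (supn (tl q))%:R <= (supn q)%:R :> R by rewrite ler_nat supn_tl.
have := powRN_anti st hsl u0.
move=> hh; apply: (le_trans _ (ltW hlt)); apply: (le_trans _ hh).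
by rewrite -[X in _ <= X]mul1r; apply: ler_wpM2r.
Qed.

End S2.
Section S3.
Local Close Scope classical_set_scope.
Variable R : realType.

Lemma harm_ln (M : nat) :
  \sum_(j < M.+1) ((j.+1)%:R : R)^-1 <= 1 + ln (M.+1)%:R.
Proof.
elim: M => [|M IH]; first by rewrite big_ord_recr big_ord0 /= add0r ln1 addr0 invr1.
rewrite big_ord_recr /=.
have x0 : 0 < (M.+1)%:R :> R by rewrite ltr0n.
have y0 : 0 < (M.+2)%:R :> R by rewrite ltr0n.
have key : ((M.+2)%:R : R)^-1 <= ln (M.+2)%:R - ln (M.+1)%:R.
  have h := @le_ln1Dx R (- ((M.+2)%:R)^-1).
  have e : 1 - ((M.+2)%:R : R)^-1 = (M.+1)%:R / (M.+2)%:R.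
    by field; rewrite gt_eqF.
  have hlt : -1 < - ((M.+2)%:R : R)^-1.
    rewrite ltrN2 invf_lt1 // ltr1n //.
  move: (h hlt); rewrite e ln_div ?posrE //.
  set z := (_ ^-1); set L1 := ln _; set L2 := ln _; lra.
move: IH key; set S := \sum_(_ < _) _; set z := (_ ^-1); set L1 := ln (M.+1)%:R; set L2 := ln _; lra.
Qed.


Lemma floor_facts (r : R) : 1 <= `|r| ->
  let m := Num.floor r in
  m != 0 /\ `|(m%:~R : R)| <= 2 * `|r| /\ `|(m%:~R : R)| <= `|r| + 1.
Proof.
move=> r1 m.
have fa : m%:~R <= r by exact: floor_le.
have fb : r < m%:~R + 1 by have := floorD1_gt r; rewrite intrD.
split.
  apply/negP => /eqP m0; move: fa fb; rewrite m0 => fa fb.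
  move: r1; have [r0|r0] := lerP 0 r; [rewrite ger0_norm // | rewrite ltr0_norm //];
  move: fa fb; rewrite ?mulr0n; lra.
have [r0|r0] := lerP 0 r; [rewrite (ger0_norm r0) | rewrite (ltr0_norm r0)];
  have [m0|m0] := lerP 0 (m%:~R : R);
  [rewrite (ger0_norm m0) | rewrite (ltr0_norm m0) | rewrite (ger0_norm m0) | rewrite (ltr0_norm m0)];
  move: r1; rewrite ?(ger0_norm r0) ?(ltr0_norm r0); lra.
Qed.


Lemma sum_sub_le (T : finType) (S : {set T}) (F : T -> R) :
  (forall k, 0 <= F k) -> \sum_(k in S) F k <= \sum_k F k.
Proof.
move=> F0; rewrite [X in _ <= X](bigID (mem S)) /= lerDl.
by apply: sumr_ge0 => k _.
Qed.

Lemma floor_sum (T : finType) (P : pred T) (a : T -> R) (s A : R) :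
  0 < s ->
  (forall t, P t -> s <= `|a t|) ->
  (forall t t', P t -> P t' -> t != t' -> s <= `|a t - a t'|) ->
  (forall t, P t -> `|a t| <= A) ->
  \sum_(t | P t) `|a t|^-1 <= 4 / s * (1 + ln ((Num.truncn (A / s)).+1)%:R).
Proof.
move=> s0 h1 h2 h3.
set M := Num.truncn (A / s).
pose mm t := Num.floor (a t / s).
pose h t : bool * 'I_M.+1 := ((0 < mm t)%R, inord (`|mm t|%N.-1)).
have r1 t : P t -> 1 <= `|a t / s|.
  by move=> Pt; rewrite normrM normfV (gtr0_norm s0) ler_pdivlMr // mul1r h1.
have hM t : P t -> (`|mm t|%N.-1 < M.+1)%N.
  move=> Pt; have [m0 [_ hb]] := floor_facts (r1 t Pt).
  have A0 : 0 <= A by apply: le_trans (h3 t Pt); exact: normr_ge0.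
  rewrite ltnS truncn_ge_nat ?divr_ge0 ?(ltW s0) //.
  have ha : `|a t / s| <= A / s.
    by rewrite normrM normfV (gtr0_norm s0) ler_pM2r ?invr_gt0 // h3.
  rewrite -subn1 natrB ?absz_gt0 //.
  rewrite natr_absz intr_norm; move: hb ha; rewrite -/(mm t); lra.
pose F (k : bool * 'I_M.+1) : R := 2 / s * (((k.2 : nat).+1)%:R)^-1.
have F0 k : 0 <= F k by rewrite /F mulr_ge0 ?divr_ge0 ?invr_ge0 ?ltW.
have hv t : P t -> `|a t|^-1 <= F (h t).
  move=> Pt; have [m0 [hb _]] := floor_facts (r1 t Pt).
  rewrite /F /h /= inordK ?hM // prednK ?absz_gt0 // natr_absz intr_norm.
  have mpos : 0 < `|(mm t)%:~R : R| by rewrite normr_gt0 intr_eq0.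
  have apos : 0 < `|a t| by apply: lt_le_trans (h1 t Pt).
  have e : 2 / s * `|(mm t)%:~R : R|^-1 = (s * `|(mm t)%:~R : R| / 2)^-1.
    by field; rewrite ?gt_eqF.
  rewrite e lef_pV2 ?posrE ?divr_gt0 ?mulr_gt0 //.
  move: hb; rewrite -/(mm t) normrM normfV (gtr0_norm s0) => hb.
  have : `|(mm t)%:~R : R| * s <= 2 * (`|a t| / s) * s by rewrite ler_pM2r.
  rewrite -mulrA divfK ?gt_eqF //; lra.
have hinj : {in [set t | P t] &, injective h}.
  move=> t t'; rewrite !inE => Pt Pt' /= [e1 e2].
  apply/eqP; apply: contraT => ne; have := h2 t t' Pt Pt' ne.
  have := congr1 val e2; rewrite /= !inordK ?hM // => e3.
  have [m0 _] := floor_facts (r1 t Pt); have [m0' _] := floor_facts (r1 t' Pt').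
  have emm : mm t = mm t' by move: e1 e3 m0 m0'; rewrite -/(mm t) -/(mm t'); lia.
  have fa : (mm t)%:~R <= a t / s by exact: floor_le.
  have fb : a t / s < (mm t)%:~R + 1 by have := floorD1_gt (a t / s); rewrite intrD.
  have fa' : (mm t')%:~R <= a t' / s by exact: floor_le.
  have fb' : a t' / s < (mm t')%:~R + 1 by have := floorD1_gt (a t' / s); rewrite intrD.
  rewrite emm in fa fb.
  have hlt : `|a t / s - a t' / s| < 1.
    rewrite ltr_norml; apply/andP; split; lra.
  have -> : a t - a t' = (a t / s - a t' / s) * s by field; rewrite gt_eqF.
  rewrite normrM (gtr0_norm s0) => hh.
  have : `|a t / s - a t' / s| * s < 1 * s by rewrite ltr_pM2r.
  lra.
apply: (le_trans (ler_sum _ (fun t Pt => hv t Pt))) => /=.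
rewrite (eq_bigl (fun t => t \in [set t | P t])); last by move=> t; rewrite inE.
rewrite -(big_imset _ hinj) /=.
apply: (le_trans (sum_sub_le _ F0)).
rewrite -(pair_big xpredT xpredT (fun (b : bool) (j : 'I_M.+1) => F (b, j))) /=.
rewrite big_bool /= /F -mulr_sumr -mulrDl.
have H := harm_ln M.
have -> : 2 / s + 2 / s = 4 / s :> R by field; rewrite gt_eqF.
by apply: ler_wpM2l; [rewrite divr_ge0 ?ltW | exact: H].
Qed.

End S3.

Unset Implicit Arguments. Set Strict Implicit.

Lemma absz_sub_le (x K : nat) : (x < (2 * K).+1)%N -> (absz (x%:Z - K%:Z)%R <= K)%N.
Proof. lia. Qed.

Lemma absz_sub2 (x y K : nat) : (x < (2 * K).+1)%N -> (y < (2 * K).+1)%N ->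
  (absz ((x%:Z - K%:Z) - (y%:Z - K%:Z))%R <= 2 * K)%N.
Proof. lia. Qed.

Lemma btqB (R : realType) (n : nat) (b : 'rV[R]_(n.-1)) (q1 q2 : 'rV[int]_n) :
  btq b (q1 - q2) = btq b q1 - btq b q2.
Proof.
rewrite /btq -sumrB; apply: eq_bigr => i _; rewrite !mxE intrB mulrBr.
by [].
Qed.

Lemma btq_bound (R : realType) (n : nat) (b : 'rV[R]_(n.-1)) (q : 'rV[int]_n) :
  `|btq b q| <= (\sum_i `|btilde b i|) * (supn q)%:R.
Proof.
rewrite /btq mulr_suml; apply: (le_trans (ler_norm_sum _ _ _)).
apply: ler_sum => i _; rewrite normrM ler_wpM2l //.
by rewrite -intr_norm -natr_absz ler_nat supn_ge.
Qed.

Lemma ln_le_pow (R : realType) (x e : R) : 0 < x -> 0 < e -> ln x <= x `^ e / e.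
Proof.
move=> x0 e0; have h := expR_ge1Dx (e * ln x).
have -> : x `^ e = expR (e * ln x) by rewrite /powR gt_eqF.
rewrite ler_pdivlMr // mulrC; lra.
Qed.

Lemma final_num (R : realType) (nn : nat) (Q v c B : R) (K L : nat) :
  1 < Q -> nn%:R < v -> 0 < c -> 0 <= B -> K%:R <= 2 * Q ->
  let g := v - nn%:R in let u := nn%:R + g / 4 in let e := g / (4 * (u + 1)) in
  let s := c * (4 * Q) `^ (- u) in
  L%:R <= B * (2 * Q) / s ->
  4 * Q `^ (- v) * (((2 * K).+1 ^ nn)%N)%:R
    + 6 * Q `^ (- v) * (4 / s * (1 + ln (L.+1)%:R))
  <= (4 * 5 ^+ nn + 24 * (4 `^ u / c) * (1 + (2 * B * 4 `^ u / c + 1) `^ e / e))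
     * Q `^ ((nn%:R - v) / 2).
Proof.
move=> Q1 hv c0 B0 hK g u e s hL.
set X := Q `^ ((nn%:R - v) / 2).
have Q0 : 0 < Q by lra.
have Q0' : Q != 0 by rewrite gt_eqF.
have g0 : 0 < g by rewrite /g subr_gt0.
have u0 : 0 < u by rewrite /u; apply: ltr_wpDl => //; rewrite divr_gt0.
have e0 : 0 < e by rewrite /e divr_gt0 // mulr_gt0 // addr_gt0.
have powD x y : Q `^ x * Q `^ y = Q `^ (x + y).
  by rewrite powRD // Q0' implybT.
have P1 : Q `^ (- v) * Q ^+ nn <= X.
  rewrite -powR_mulrn ?(ltW Q0) // powD /X; apply: ler_powR; first exact: ltW.
  lra.
have P2 : Q `^ (- v) * Q `^ u <= X.
  rewrite powD; rewrite /X; apply: ler_powR; first exact: ltW.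
  rewrite /u /g; lra.
have eue : (u + 1) * e = g / 4 by rewrite /e; field; rewrite gt_eqF // addr_gt0.
have P3 : Q `^ (- v) * Q `^ u * Q `^ ((u + 1) * e) <= X.
  rewrite !powD eue; rewrite /X; apply: ler_powR; first exact: ltW.
  rewrite /u /g; lra.
have k1 : (((2 * K).+1 ^ nn)%N)%:R <= 5 ^+ nn * Q ^+ nn :> R.
  rewrite natrX -exprMn; apply: lerXn2r;
    [by rewrite nnegrE | by rewrite nnegrE mulr_ge0 // ltW | ].
  rewrite -natr1 natrM; lra.
have W0 : 0 <= 4 `^ u / c by rewrite divr_ge0 ?powR_ge0 ?ltW.
have h4u : 4 `^ u != 0 :> R by rewrite gt_eqF // powR_gt0.
have hQu : Q `^ u != 0 by rewrite gt_eqF // powR_gt0.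
have hc : c != 0 by rewrite gt_eqF.
have sinv' : s^-1 = 4 `^ u / c * Q `^ u.
  rewrite /s powRN powRM; [|lra|lra].
  by field; rewrite h4u hQu hc.
have sinv : 4 / s = 4 * (4 `^ u / c) * Q `^ u by rewrite sinv'; ring.
set D := 2 * B * 4 `^ u / c + 1.
have D1 : 0 <= 2 * B * 4 `^ u / c.
  apply: divr_ge0; last exact: ltW.
  by apply: mulr_ge0; [apply: mulr_ge0 | exact: powR_ge0].
have D0 : 0 < D by rewrite /D; lra.
have Qu1 : 1 <= Q `^ (u + 1).
  rewrite -[leLHS](powRr0 Q); apply: (ler_powR (ltW Q1)).
  by rewrite addr_ge0 // ltW.
have hL1 : (L.+1)%:R <= D * Q `^ (u + 1).
  have QQ : Q * Q `^ u = Q `^ (u + 1).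
    by rewrite -{1}(powRr1 (ltW Q0)) powD addrC.
  have eB : B * (2 * Q) / s = (D - 1) * Q `^ (u + 1).
    by rewrite sinv' -QQ /D; ring.
  rewrite -natr1; move: hL; rewrite eB => hL.
  have -> : D * Q `^ (u + 1) = (D - 1) * Q `^ (u + 1) + Q `^ (u + 1) by ring.
  exact: (lerD hL Qu1).
have L0 : 0 < (L.+1)%:R :> R by rewrite ltr0n.
have lnb : ln (L.+1)%:R <= D `^ e / e * Q `^ ((u + 1) * e).
  apply: (le_trans (@ln_le_pow _ _ _ L0 e0)).
  have D0' : 0 <= D := ltW D0.
  rewrite mulrAC ler_pM2r ?invr_gt0 // powRrM -powRM ?powR_ge0 //.
  apply: ge0_ler_powR; [exact: ltW e0 | by rewrite nnegrE |
    by rewrite nnegrE mulr_ge0 // powR_ge0 | exact: hL1].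
set a1 := Q `^ (- v).
have a10 : 0 <= a1 by exact: powR_ge0.
set Z := a1 * Q `^ u.
have Z0 : 0 <= Z by rewrite mulr_ge0 ?powR_ge0.
have lnL0 : 0 <= ln (L.+1)%:R :> R by rewrite ln_ge0 // ler1n.
have De0 : 0 <= D `^ e / e by rewrite divr_ge0 ?powR_ge0 ?ltW.
have h2 : Z * ln (L.+1)%:R <= D `^ e / e * X.
  apply: (le_trans (ler_wpM2l Z0 lnb)).
  rewrite mulrCA; apply: ler_wpM2l => //.
have t1 : 4 * a1 * (((2 * K).+1 ^ nn)%N)%:R <= 4 * 5 ^+ nn * X.
  rewrite -mulrA -[4 * 5 ^+ nn * X]mulrA; apply: ler_wpM2l => //.
  apply: (le_trans (ler_wpM2l a10 k1)).
  rewrite mulrCA; apply: ler_wpM2l => //; exact: exprn_ge0.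
have e2 : 6 * a1 * (4 / s * (1 + ln (L.+1)%:R)) =
          24 * (4 `^ u / c) * (Z + Z * ln (L.+1)%:R).
  by rewrite sinv /Z; ring.
rewrite e2.
have t2 : 24 * (4 `^ u / c) * (Z + Z * ln (L.+1)%:R) <=
          24 * (4 `^ u / c) * (X + D `^ e / e * X).
  apply: ler_wpM2l; first by rewrite mulr_ge0.
  exact: lerD.
apply: (le_trans (lerD t1 t2)).
rewrite le_eqVlt; apply/orP; left; apply/eqP; ring.
Qed.

Theorem lemma4p8 (R : realType) (n : nat) (b : 'rV[R]_(n.-1)) (v : R) :
  (2 <= n)%N -> ~ @W_plus R n b -> n%:R < v ->
  exists C : R, 0 < C /\
    forall Q : R, 1 < Q ->
      (lebesgue_measure (A_set b v Q) < (C * Q `^ ((n%:R - v) / 2))%:E)%E.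
Proof.
case: n b => [|m] b // n2 hW hv.
set g := v - m.+1%:R.
have g0 : 0 < g by rewrite /g subr_gt0.
set u := m.+1%:R + g / 4.
have u0 : 0 <= u by rewrite /u addr_ge0 ?divr_ge0 ?ltW.
have fin : finite_set (@Sset R m b u).
  apply: contrapT => inf; apply: hW; exists u => //=.
  rewrite /u; lra.
have [c [c0 [c1 hc]]] := dioph u0 fin.
set B := \sum_(i < m.+1) `|btilde b i|.
have B0 : 0 <= B by apply: sumr_ge0 => i _.
set e := g / (4 * (u + 1)).
set C0 := 4 * 5 ^+ m.+1 + 24 * (4 `^ u / c) * (1 + (2 * B * 4 `^ u / c + 1) `^ e / e).
have C00 : 0 <= C0.
  have c0' : 0 <= c := ltW c0.
  have e0 : 0 <= e by apply: divr_ge0; [exact: ltW g0 | apply: mulr_ge0 => //; exact: addr_ge0].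
  have W0 : 0 <= 4 `^ u / c by apply: divr_ge0 => //; exact: powR_ge0.
  have D0 : 0 <= (2 * B * 4 `^ u / c + 1) `^ e / e.
    by apply: divr_ge0 => //; exact: powR_ge0.
  apply: addr_ge0; first by apply: mulr_ge0 => //; exact: exprn_ge0.
  apply: mulr_ge0; first exact: mulr_ge0.
  exact: addr_ge0.
exists (C0 + 1); split; first by rewrite ltr_pwDr.
move=> Q Q1.
have Q0 : 0 < Q by apply: lt_trans Q1.
set d := Q `^ (- v).
have d0 : 0 <= d by exact: powR_ge0.
have v0 : 0 <= v by apply: le_trans (ltW hv).
have d1 : d <= 1 by apply: powR_le1 => //; exact: ltW.
set K := Num.truncn (2 * Q).
have hK : K%:R <= 2 * Q by rewrite truncn_le mulr_ge0 // ltW.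
pose T := {ffun 'I_m.+1 -> 'I_(2 * K).+1}.
pose vec (t : T) : 'rV[int]_m.+1 := \row_i ((t i : nat)%:Z - K%:Z).
pose P (t : T) : bool := Q <= (supn (vec t))%:R.
pose a (t : T) : R := btq (n := m.+1) b (vec t).
set s := c * (4 * Q) `^ (- u).
have vK t : (supn (vec t) <= K)%N.
  by apply/bigmax_leqP => i _; rewrite mxE; apply: absz_sub_le.
have vD t t' : (supn (vec t - vec t') <= 2 * K)%N.
  by apply/bigmax_leqP => i _; rewrite !mxE; apply: absz_sub2.
have vinj : injective vec.
  move=> t t' /rowP e1; apply/ffunP => i; apply: ord_inj.
  by have := e1 i; rewrite !mxE => /addIr /eqP; rewrite eqz_nat => /eqP.
have KQ : (K%:R : R) <= 4 * Q by lra.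
have hs0 : 0 < s by rewrite /s mulr_gt0 // powR_gt0 // mulr_gt0.
have slow (w : 'rV[int]_m.+1) : w != 0 -> ((supn w)%:R <= 4 * Q) -> s <= `|btq (n := m.+1) b w|.
  move=> w0 hw; apply: (le_trans _ (hc w w0)); apply: ler_wpM2l; first exact: ltW.
  by apply: powRN_anti => //; rewrite ltr0n supn_gt0.
have supn0 (w : 'rV[int]_m.+1) : supn w = 0%N -> w = 0.
  move=> h; apply/rowP => i; rewrite mxE; have := supn_ge w i.
  by rewrite h leqn0 absz_eq0 => /eqP.
have Pnz t : P t -> vec t != 0.
  rewrite /P => Pt; apply/eqP => h; move: Pt; rewrite h.
  have -> : supn (0 : 'rV[int]_m.+1) = 0%N.
    by apply/eqP; rewrite -leqn0; apply/bigmax_leqP => i _; rewrite mxE.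
  by move=> hh; move: Q0; rewrite ltNge hh.
have ha1 t : P t -> s <= `|a t|.
  move=> Pt; apply: slow; first exact: Pnz.
  by apply: (le_trans _ KQ); rewrite ler_nat.
have ha2 t t' : P t -> P t' -> t != t' -> s <= `|a t - a t'|.
  move=> _ _ tt; rewrite /a -btqB; apply: slow.
    by rewrite subr_eq0; apply: contra tt => /eqP /vinj ->.
  apply: (@le_trans _ _ ((2 * K)%:R)); first by rewrite ler_nat.
  by rewrite natrM; lra.
have ha3 t : P t -> `|a t| <= B * (2 * Q).
  move=> _; apply: (le_trans (@btq_bound _ _ b (vec t))); apply: ler_wpM2l => //.
  by apply: (le_trans _ hK); rewrite ler_nat.
pose G (t : T) : set R := if P t then strip (a t) d else set0.
have cover : A_set b v Q `<=` \bigcup_t G t.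
  move=> x [xb [p [q [/andP[hq1 hq2] hx]]]].
  have sq : (supn q <= K)%N.
    by rewrite truncn_ge_nat ?mulr_ge0 ?ltW //.
  have hi i : (absz (q ord0 i + K%:Z)%R < (2 * K).+1)%N.
    have := supn_ge q i; move: sq; clear; lia.
  pose t : T := [ffun i => Ordinal (hi i)].
  have vt : vec t = q.
    apply/rowP => i; rewrite !mxE ffunE /=.
    have -> : (0 : 'I_1) = ord0 by apply: ord_inj.
    have := supn_ge q i; move: sq; clear; lia.
  exists t => //; rewrite /G /P vt hq1; split => //.
  by exists p; rewrite /a vt.
have hmu : (lebesgue_measure (A_set b v Q) <=
    (\sum_(t | P t) (4 * d + 6 * d / `|a t|))%:E)%E.
  apply: (le_trans (le_outer_measure lebesgue_measure _ _ cover)).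
  apply: (le_trans (mu_bigcup_fin G)).
  rewrite -sumEFin [X in (_ <= X)%E]big_mkcond /=; apply: lee_sum => t _.
  rewrite /G; case: ifP => Pt; last by rewrite measure0.
  apply: mu_strip; last by rewrite d0 d1.
  by rewrite -normr_gt0; apply: lt_le_trans (ha1 t Pt).
have hsum : \sum_(t | P t) (4 * d + 6 * d / `|a t|) <=
    4 * d * (((2 * K).+1 ^ m.+1)%N)%:R
    + 6 * d * (4 / s * (1 + ln ((Num.truncn (B * (2 * Q) / s)).+1)%:R)).
  rewrite big_split /=; apply: lerD.
    apply: (@le_trans _ _ (\sum_(t : T) (4 * d))).
      rewrite [X in _ <= X](bigID P) /= lerDl.
      by apply: sumr_ge0 => t _; rewrite mulr_ge0.
    by rewrite sumr_const card_ffun !card_ord mulr_natr.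
  rewrite -mulr_sumr; apply: ler_wpM2l; first by rewrite mulr_ge0.
  exact: floor_sum.
have hfin := @final_num R m.+1 Q v c B K (Num.truncn (B * (2 * Q) / s)) Q1 hv c0 B0 hK.
have hL : (Num.truncn (B * (2 * Q) / s))%:R <= B * (2 * Q) / s.
  rewrite truncn_le; apply: divr_ge0; last exact: ltW.
  by apply: mulr_ge0 => //; apply: mulr_ge0 => //; exact: ltW.
have hf := hfin hL.
apply: (le_lt_trans hmu); rewrite lte_fin.
apply: (le_lt_trans hsum); apply: (le_lt_trans hf).
by rewrite ltr_pM2r ?powR_gt0 // ltrDl ltr01.
Qed.
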